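(* Let $r_0,\dots,r_{f-1}$ be integers in $[1,p]$, let $J\subset\{0,\dots,f-1\}$, and set $h_i=r_i$ if $i\in J$, $h_i=0$ if $i\notin J$. Fix $a,b\in k_E^\times$. Let $\overline{\mathfrak M}$ be an extension of $\overline{\mathfrak M}(h_0,\dots,h_{f-1};a)$ by $\overline{\mathfrak M}(r_0-h_0,\dots,r_{f-1}-h_{f-1};b)$. Then one can choose $k_E[[u]]$-bases $e_i,f_i$ of $\overline{\mathfrak M}_i$ such that $$\varphi(e_{i-1})=(b)_iu^{r_i-h_i}e_i,\qquad\varphi(f_{i-1})=(a)_iu^{h_i}f_i+x_ie_i$$ with each $x_i\in k_E[[u]]$ a polynomial of degree $<h_i$, except in the following cases: (i) $(r_0,\dots,r_{f-1})\in\mathcal P$, $J=\{i: r_{i-1}\ne p\}$ and $a=b$; or (ii) $p=2$, $(r_0,\dots,r_{f-1})=(2,\dots,2)$, $J=\{0,\dots,f-1\}$ and $a=b$. In these exceptional cases, for any fixed $i_0\in J$, the $x_i$ may be taken to be polynomials of degree $<h_i$ for all $i\ne i_0$, and $x_{i_0}$ the sum of a polynomial of degree $<h_{i_0}$ and a (possibly zero) monomial of degree $p$ (in case (i)) or degree $4$ (in case (ii)).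
   Context: $K/\mathbb Q_p$ is unramified of degree $f$ with residue field $k$, $\mathfrak S=W(k)[[u]]$ with Frobenius $\varphi$ (Witt Frobenius, $u\mapsto u^p$). $E$ is a finite extension of $\mathbb Q_p$ containing all embeddings of $K$, with integers $\mathcal O_E$ and residue field $k_E$. Fix $\kappa_0\colon K\hookrightarrow E$, $\kappa_{s+1}^p\equiv\kappa_s\pmod p$ (indices mod $f$); $\varepsilon_s\in W(k)\otimes_{\mathbb Z_p}\mathcal O_E$ is the idempotent with $(x\otimes1)\varepsilon_s=(1\otimes\kappa_s(x))\varepsilon_s$, and $M_s=\varepsilon_sM$, so $\mathfrak S\otimes_{\mathbb Z_p}k_E=\prod_sk_E[[u]]$ and $\varphi$ maps the $(s-1)$-component to the $s$-component. For integers $r_i\ge0$ and $a\in k_E^\times$, $\overline{\mathfrak M}(r_0,\dots,r_{f-1};a)$ is the free rank one $\mathfrak S\otimes_{\mathbb Z_p}k_E$-module with semilinear $\varphi$ such that the $i$-th component is generated by $e_i$ and $\varphi(e_{i-1})=(a)_iu^{r_i}e_i$, where $(a)_i=a$ if $i\equiv0\pmod f$ and $(a)_i=1$ otherwise. An extension of $\mathfrak A$ by $\mathfrak B$ is a short exact sequence $0\to\mathfrak B\to\overline{\mathfrak M}\to\mathfrak A\to0$ of $\mathfrak S\otimes k_E$-modules with $k_E$-linear semilinear $\varphi$. $\mathcal P$ is the set of $f$-tuples $(r_0,\dots,r_{f-1})$ with $r_i\in\{1,p-1,p\}$ such that (indices mod $f$) $r_i=p\Rightarrow r_{i+1}=1$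 and $r_i\in\{1,p-1\}\Rightarrow r_{i+1}\in\{p-1,p\}$. *)

(* Defs.v *)
(* Formal power series k_E[[u]] over a field, and the
   data needed to state Theorem 8 about extensions of rank-one
   Kisin-type phi-modules over S (x) k_E = prod_{i < f} k_E[[u]]. *)
From HB Require Import structures.
From mathcomp Require Import all_boot all_order all_algebra.
From Stdlib Require Import ClassicalEpsilon FunctionalExtensionality.
Set Implicit Arguments.
Unset Strict Implicit.
Unset Printing Implicit Defensive.
Import Order.TTheory GRing.Theory Num.Theory.
Local Open Scope ring_scope.

Record pser (R : Type) := Pser { coefs : nat -> R }.
Arguments Pser {R}.

Section PserChoice.
Variable R : Type.

Lemma pser_ext (x y : pser R) : (forall n, coefs x n = coefs y n) -> x = y.
Proof.
case: x; case: y => g h E; congr Pser; exact: functional_extensionality.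
Qed.

Definition pser_eqb (x y : pser R) : bool :=
  if excluded_middle_informative (x = y) then true else false.
Lemma pser_eqP : Equality.axiom pser_eqb.
Proof.
by move=> x y; rewrite /pser_eqb; case: excluded_middle_informative => H;
  constructor.
Qed.
HB.instance Definition _ := hasDecEq.Build (pser R) pser_eqP.

Definition pser_find (P : pred (pser R)) (n : nat) : option (pser R) :=
  match excluded_middle_informative (exists x, P x) with
  | left H => Some (proj1_sig (constructive_indefinite_description _ H))
  | right _ => None
  end.
Lemma pser_find_correct P n x : pser_find P n = Some x -> P x.
Proof.
rewrite /pser_find; case: excluded_middle_informative => // H [<-].
exact: proj2_sig (constructive_indefinite_description _ H).
Qed.
Lemma pser_find_complete (P : pred (pser R)) :
  (exists x, P x) -> exists n, pser_find P n.
Proof.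
by move=> H; exists 0%N; rewrite /pser_find; case: excluded_middle_informative.
Qed.
Lemma pser_find_ext (P Q : pred (pser R)) :
  P =1 Q -> pser_find P =1 pser_find Q.
Proof.
by move=> E; have -> : P = Q by apply: functional_extensionality.
Qed.
HB.instance Definition _ := hasChoice.Build (pser R)
  pser_find_correct pser_find_complete pser_find_ext.
End PserChoice.

Section PserRing.
Variable R : comNzRingType.
Implicit Types x y z : pser R.

Definition pser0 : pser R := Pser (fun _ => 0).
Definition pser_opp x : pser R := Pser (fun n => - coefs x n).
Definition pser_add x y : pser R := Pser (fun n => coefs x n + coefs y n).

Fact pser_addA : associative pser_add.
Proof. by move=> x y z; apply: pser_ext => n /=; rewrite addrA. Qed.
Fact pser_addC : commutative pser_add.
Proof. by move=> x y; apply: pser_ext => n /=; rewrite addrC. Qed.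
Fact pser_add0 : left_id pser0 pser_add.
Proof. by move=> x; apply: pser_ext => n /=; rewrite add0r. Qed.
Fact pser_addN : left_inverse pser0 pser_opp pser_add.
Proof. by move=> x; apply: pser_ext => n /=; rewrite addNr. Qed.
HB.instance Definition _ :=
  GRing.isZmodule.Build (pser R) pser_addA pser_addC pser_add0 pser_addN.

Definition pser1 : pser R := Pser (fun n => (n == 0)%:R).
Definition pser_mul x y : pser R :=
  Pser (fun i => \sum_(j < i.+1) coefs x j * coefs y (i - j)).

Lemma coef_pser_mul x y i :
  coefs (pser_mul x y) i = \sum_(j < i.+1) coefs x j * coefs y (i - j).
Proof. by []. Qed.

Lemma coef_pser_mul_rev x y i :
  coefs (pser_mul x y) i = \sum_(j < i.+1) coefs x (i - j) * coefs y j.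
Proof.
rewrite /= (reindex_inj rev_ord_inj) /=.
apply: eq_bigr => j _; rewrite subSS subKn // -ltnS; exact: ltn_ord.
Qed.

Fact pser_mulA : associative pser_mul.
Proof.
move=> p q r; apply: pser_ext => i.
rewrite [RHS]coef_pser_mul_rev [LHS]coef_pser_mul.
pose coef3 j k := coefs p j * (coefs q (i - j - k) * coefs r k).
transitivity (\sum_(j < i.+1) \sum_(k < i.+1 | (k <= i - j)%N) coef3 j k).
  apply: eq_bigr => j _; rewrite coef_pser_mul_rev big_distrr /=.
  by rewrite (big_ord_narrow_leq (leq_subr _ _)).
rewrite (exchange_big_dep predT) //; apply: eq_bigr => k _.
transitivity (\sum_(j < i.+1 | (j <= i - k)%N) coef3 j k).
  apply: eq_bigl => j; rewrite -ltnS -(ltnS j) -!subSn ?leq_ord //.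
  by rewrite -subn_gt0 -(subn_gt0 j) -!subnDA addnC.
rewrite (big_ord_narrow_leq (leq_subr _ _)) coef_pser_mul big_distrl /=.
by apply: eq_bigr => j _; rewrite /coef3 -!subnDA addnC mulrA.
Qed.

Fact pser_mulC : commutative pser_mul.
Proof.
move=> x y; apply: pser_ext => i; rewrite coef_pser_mul_rev /=.
by apply: eq_bigr => j _; rewrite mulrC.
Qed.

Fact pser_mul1 : left_id pser1 pser_mul.
Proof.
move=> p; apply: pser_ext => i; rewrite /= big_ord_recl subn0 /= mul1r.
by rewrite big1 ?addr0 // => j _; rewrite mul0r.
Qed.

Fact pser_mulDl : left_distributive pser_mul pser_add.
Proof.
move=> p q r; apply: pser_ext => i /=; rewrite -big_split /=.
by apply: eq_bigr => j _; rewrite mulrDl.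
Qed.

Fact pser_one_neq0 : pser1 != pser0.
Proof.
apply/eqP => /(congr1 (fun x => coefs x 0%N)) /= /eqP; by rewrite oner_eq0.
Qed.

HB.instance Definition _ := GRing.Zmodule_isComNzRing.Build (pser R)
  pser_mulA pser_mulC pser_mul1 pser_mulDl pser_one_neq0.
End PserRing.

Section PserOps.
Variable R : comNzRingType.

Definition pser_u : pser R := Pser (fun n => (n == 1)%:R).
Definition pser_const (c : R) : pser R :=
  Pser (fun n => if n == 0 then c else 0).
Definition pser_deg_lt (x : pser R) (d : nat) : Prop :=
  forall n, (d <= n)%N -> coefs x n = 0.
(* Frobenius of S (x) k_E on a component: k_E-linear, u |-> u^p,
   i.e. sum c_n u^n |-> sum c_n u^(p n). *)
Definition pser_frob (p : nat) (x : pser R) : pser R :=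
  Pser (fun n => if (p %| n)%N then coefs x (n %/ p) else 0).
End PserOps.

Definition iprev (f : nat) (i : 'I_f) : 'I_f := ord_pred i.
Definition inext (f : nat) (i : 'I_f) : 'I_f := ordS i.

(* (a)_i = a if i = 0 mod f, 1 otherwise *)
Definition twist (F : nzRingType) (f : nat) (a : F) (i : 'I_f) : F :=
  if val i == 0%N then a else 1.

Definition hJ (f : nat) (J : {set 'I_f}) (r : 'I_f -> nat) (i : 'I_f) : nat :=
  if i \in J then r i else 0%N.

Definition inP (p f : nat) (r : 'I_f -> nat) : Prop :=
  forall i : 'I_f,
    [/\ r i \in [:: 1%N; p.-1; p],
        r i = p -> r (inext i) = 1%N
      & r i \in [:: 1%N; p.-1] -> r (inext i) \in [:: p.-1; p]].

(* The rank-one modules Mbar(s_0,...,s_{f-1}; c) are modelled concretely: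
   the i-th component is k_E[[u]] with generator 1, and
   phi(x e_{i-1}) = frob(x) (c)_i u^{s_i} e_i. *)
Definition phi_rk1 (F : fieldType) (p f : nat) (s : 'I_f -> nat) (c : F)
  (i : 'I_f) (x : pser F) : pser F :=
  pser_const (twist c i) * pser_u F ^+ s i * pser_frob p x.

(* An extension 0 -> Mbar(s;c) -> M -> Mbar(t;d) -> 0 (B := Mbar(s;c),
   A := Mbar(t;d)) of S(x)k_E-modules with semilinear phi, given
   componentwise: M_i is a k_E[[u]]-module, phiM i : M_{i-1} -> M_i is
   additive and frob-semilinear, iota, pi are k_E[[u]]-linear,
   phi-compatible and form a short exact sequence in each component. *)
Definition is_extension (F : fieldType) (p f : nat)
  (s : 'I_f -> nat) (c : F) (t : 'I_f -> nat) (d : F)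
  (M : 'I_f -> lmodType (pser F))
  (phiM : forall i : 'I_f, M (iprev i) -> M i)
  (iota : forall i : 'I_f, pser F -> M i)
  (pi : forall i : 'I_f, M i -> pser F) : Prop :=
  (forall i (m m' : M (iprev i)), phiM i (m + m') = phiM i m + phiM i m') /\
  (forall i (x : pser F) (m : M (iprev i)),
      phiM i (x *: m) = pser_frob p x *: phiM i m) /\
  (forall i (x y z : pser F), iota i (x * y + z) = x *: iota i y + iota i z) /\
  (forall i (x : pser F) (m m' : M i), pi i (x *: m + m') = x * pi i m + pi i m') /\
  (forall i (x : pser F),
      phiM i (iota (iprev i) x) = iota i (phi_rk1 p s c i x)) /\
  (forall i (m : M (iprev i)),
      pi i (phiM i m) = phi_rk1 p t d i (pi (iprev i) m)) /\
  (forall i, injective (iota i)) /\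
  (forall i (y : pser F), exists m : M i, pi i m = y) /\
  (forall i (m : M i), pi i m = 0 <-> exists x, m = iota i x).

Definition is_basis2 (F : fieldType) (V : lmodType (pser F)) (e g : V) : Prop :=
  forall m : V, exists! xy : pser F * pser F, m = xy.1 *: e + xy.2 *: g.

Definition good_bases (F : fieldType) (p f : nat)
  (s : 'I_f -> nat) (b : F) (t : 'I_f -> nat) (a : F)
  (M : 'I_f -> lmodType (pser F))
  (phiM : forall i : 'I_f, M (iprev i) -> M i)
  (iota : forall i : 'I_f, pser F -> M i)
  (shape : forall i : 'I_f, pser F -> Prop) : Prop :=
  exists (e g : forall i, M i) (x : forall i : 'I_f, pser F),
    [/\ forall i, is_basis2 (e i) (g i),
        forall i (m : M i), (exists y, m = iota i y) <-> (exists y, m = y *: e i),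
        forall i, phiM i (e (iprev i)) =
                  (pser_const (twist b i) * pser_u F ^+ s i) *: e i,
        forall i, phiM i (g (iprev i)) =
                  (pser_const (twist a i) * pser_u F ^+ t i) *: g i
                  + x i *: e i
      & forall i, shape i (x i)].

Arguments is_extension {F} p {f} s c t d M phiM iota pi.
Arguments good_bases {F} p {f} s b t a M phiM iota shape.

(* Main.v *)
Require Import Defs.
From HB Require Import structures.
From mathcomp Require Import all_boot all_order all_algebra.
From mathcomp Require Import zify ring.
From Stdlib Require Import Classical ClassicalEpsilon.
Set Implicit Arguments.
Unset Strict Implicit.
Unset Printing Implicit Defensive.

Section Iter.
Variable f : nat.

Lemma val_iter_next d (j : 'I_f) : val (iter d (@inext f) j) = ((j + d) %% f)%N.
Proof.
elim: d => [|d IH] /=; first by rewrite addn0 modn_small.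
rewrite /inext /= IH -addn1 modnDml; congr (_ %% _)%N; lia.
Qed.

Lemma iter_prev_next d (j : 'I_f) : iter d (@iprev f) (iter d (@inext f) j) = j.
Proof.
elim: d j => [|d IH] j //.
by rewrite iterSr iterS /iprev /inext ordSK IH.
Qed.

Lemma iter_next_prev d (j : 'I_f) : iter d (@inext f) (iter d (@iprev f) j) = j.
Proof.
elim: d j => [|d IH] j //.
by rewrite iterSr iterS /iprev /inext ord_predK IH.
Qed.

Lemma iter_next_reach (j j' : 'I_f) : exists d, iter d (@inext f) j = j'.
Proof.
exists (j' + f - j)%N; apply: val_inj; rewrite val_iter_next /=.
have Hj := ltn_ord j; have Hj' := ltn_ord j'.
rewrite (_ : (j + (j' + f - j)) = j' + f)%N; last by lia.
by rewrite modnDr modn_small.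
Qed.

Lemma hits (i : 'I_f) K (j : 'I_f) : exists k, (K <= k)%N /\ iter k (@iprev f) i = j.
Proof.
have [d Hd] := iter_next_reach j (iter K (@iprev f) i).
exists (d + K)%N; split; first by lia.
by rewrite iterD -Hd iter_prev_next.
Qed.

Lemma iter_next_f (x : 'I_f) : iter f (@inext f) x = x.
Proof. by apply: val_inj; rewrite val_iter_next modnDr modn_small. Qed.

Lemma iter_prev_f (x : 'I_f) : iter f (@iprev f) x = x.
Proof. by rewrite -{1}(iter_next_f x) iter_prev_next. Qed.

Lemma iter_prev_neq (x : 'I_f) j : (0 < j < f)%N -> iter j (@iprev f) x != x.
Proof.
move=> Hj; apply/eqP => E.
have : val (iter j (@inext f) (iter j (@iprev f) x)) = val x by rewrite iter_next_prev.
rewrite E val_iter_next /=; have Hx := ltn_ord x.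
case: (ltnP (x + j) f) => H.
  rewrite modn_small //; lia.
rewrite -(subnK H) modnDr modn_small; lia.
Qed.
End Iter.

Section Comb.
Variables (p f : nat) (p2 : (2 <= p)%N) (r : 'I_f -> nat)
  (rr : forall i, (1 <= r i <= p)%N) (J : {set 'I_f}).

Definition hh i := hJ J r i.
Definition ss i := (r i - hh i)%N.
Definition ExcI := inP p r /\ J = [set i | r (iprev i) != p].
Definition ExcII := p = 2%N /\ (forall i, r i = 2%N) /\ J = [set: 'I_f].

Lemma hh_in i : i \in J -> hh i = r i /\ ss i = 0%N.
Proof. by rewrite /ss /hh /hJ => ->; rewrite subnn. Qed.
Lemma hh_out i : i \notin J -> hh i = 0%N /\ ss i = r i.
Proof. by rewrite /ss /hh /hJ => /negbTE ->; rewrite subn0. Qed.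

Lemma excI_of :
  (forall j, (j \in J -> r j + (inext j \in J) = p) /\
             (j \notin J -> r j = 1 /\ inext j \in J)) -> ExcI.
Proof.
move=> G; split.
  move=> i; have [A1 B1] := G i; have [A2 B2] := G (inext i).
  have r1 := rr i; have r2 := rr (inext i).
  case Hi: (i \in J) in A1 B1; case Hn: (inext i \in J) in A1 B1 A2 B2;
  case Hnn: (inext (inext i) \in J) in A2 B2;
  rewrite /= ?inE in A1 B1 A2 B2 *;
  try (have := A1 erefl); try (have := B1 erefl); try (have := A2 erefl); try (have := B2 erefl);
  split; lia.
apply/setP => i; rewrite inE.
have E : inext (iprev i) = i by rewrite /inext /iprev ord_predK.
have [A B] := G (iprev i); rewrite E in A B; have := rr (iprev i).
case Hi: (i \in J) in A B *; case Hp: (iprev i \in J) in A B *;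
  try (have := A erefl); try (have := B erefl); lia.
Qed.

Lemma excI_II : (0 < f)%N -> ExcI -> ExcII -> False.
Proof.
move=> f0 [HP _] [p2' [r2 _]].
have [_ H _] := HP (Ordinal f0).
have := H (etrans (r2 _) (esym p2')); rewrite r2; lia.
Qed.

Lemma ar_in p' n x r' : (2 <= p' -> n <= 1 -> 1 <= r' <= p' -> p' * x = n + r' -> x = 1 /\ r' + n = p')%N.
Proof. by move: x => [|[|x]] H1 H2 H3 H4; nia. Qed.

Lemma chain_struct (i : 'I_f) (nn : nat -> nat) :
  (nn 0 <= 2)%N ->
  (forall k, (ss (iter k (@iprev f) i) <= nn k + hh (iter k (@iprev f) i))%N /\
     (p * nn k.+1 = nn k + hh (iter k (@iprev f) i) - ss (iter k (@iprev f) i))%N) ->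
  exists K,
    (ExcI /\ forall k, (K <= k)%N ->
        nn k = (inext (iter k (@iprev f) i) \in J) /\
        (iter k (@iprev f) i \in J -> nn k + r (iter k (@iprev f) i) = p)%N)
    \/ (ExcII /\ forall k, (K <= k)%N -> nn k = 2%N).
Proof.
move=> H0 Hrel.
set c := fun k => iter k (@iprev f) i.
have HR k : (c k \in J -> p * nn k.+1 = nn k + r (c k))%N /\
            (c k \notin J -> r (c k) <= nn k /\ p * nn k.+1 = nn k - r (c k))%N.
  have [A B] := Hrel k; split => Hc.
    by have [E1 E2] := hh_in Hc; rewrite E1 E2 in A B; lia.
  by have [E1 E2] := hh_out Hc; rewrite E1 E2 in A B; lia.
have bnd k : (nn k <= 2)%N.
  elim: k => [|k IH] //; have [A B] := HR k; have := rr (c k).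
  case Hc: (c k \in J) in A B; [have := A erefl | have := B erefl]; nia.
have cS k : inext (c k.+1) = c k by rewrite /c iterS /inext /iprev ord_predK.
case: (classic (exists k, nn k <= 1)%N) => [[k0 Hk0]|Hno].
- have tail k : (k0 <= k -> nn k <= 1)%N.
    elim: k => [|k IH] Hk; first by (have E : k0 = 0%N by lia); rewrite E in Hk0.
    case: (ltngtP k0 k.+1) => Hk'; [|lia| by subst k0].
    have IH' := IH Hk'; have [A B] := HR k; have := rr (c k).
    case Hc: (c k \in J) in A B; [have := A erefl | have := B erefl]; nia.
  have loc k : (k0 <= k)%N ->
     (c k \in J -> nn k.+1 = 1 /\ r (c k) + nn k = p)%N /\
     (c k \notin J -> nn k.+1 = 0 /\ nn k = 1 /\ r (c k) = 1)%N.
    move=> Hk; have T := tail k Hk; have [A B] := HR k; have R := rr (c k).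
    split => Hc; [have := A Hc | have := B Hc]; [move/(ar_in p2 T R) | ]; nia.
  have tail2 k : (k0 < k)%N -> nn k = (inext (c k) \in J).
    case: k => [|k] // Hk; rewrite cS; have [A B] := loc k Hk.
    by case Hc: (c k \in J) in A B *; [have := A erefl | have := B erefl]; lia.
  exists k0.+1; left; split.
    apply: excI_of => j; have [k [Hk Ej]] := hits i k0.+1 j.
    have [A B] := loc k (ltnW Hk); have T2 := tail2 k Hk.
    rewrite -/(c k) in Ej; rewrite -Ej; split => Hc.
      by have [A1 A2] := A Hc; rewrite -T2; lia.
    by have [B1 [B2 B3]] := B Hc; split => //; move: T2; rewrite B2; case: (_ \in J).
  move=> k Hk; rewrite -/(c k); split; first exact: tail2.
  by move=> Hc; have [A _] := loc k (ltnW Hk); have [_ A2] := A Hc; lia.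
- have two k : nn k = 2%N.
    have B := bnd k; have NB : ~ (nn k <= 1)%N by move=> H; apply: Hno; exists k.
    lia.
  have loc k : c k \in J /\ r (c k) = 2%N /\ p = 2%N.
    have [A B] := HR k; have := rr (c k); rewrite !two in A B.
    case Hc: (c k \in J) in A B *; [have := A erefl | have := B erefl]; nia.
  exists 0%N; right; split => //.
  split; first by have [_ [_ ->]] := loc 0%N.
  split.
    by move=> j; have [k [_ <-]] := hits i 0 j; have [_ [-> _]] := loc k.
  apply/setP => j; rewrite inE; have [k [_ <-]] := hits i 0 j.
  by have [-> _] := loc k.
Qed.
End Comb.

Import Order.TTheory GRing.Theory Num.Theory.
Local Open Scope ring_scope.

Section PS.
Variable R : comNzRingType.
Implicit Types x y : pser R.

Lemma coefsD x y n : coefs (x + y) n = coefs x n + coefs y n. Proof. by []. Qed.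
Lemma coefsN x n : coefs (- x) n = - coefs x n. Proof. by []. Qed.
Lemma coefsB x y n : coefs (x - y) n = coefs x n - coefs y n. Proof. by []. Qed.
Lemma coefsM x y n : coefs (x * y) n = \sum_(j < n.+1) coefs x j * coefs y (n - j).
Proof. by []. Qed.

Lemma coefs_constM c y n : coefs (pser_const c * y) n = c * coefs y n.
Proof.
rewrite coefsM big_ord_recl /= subn0 big1 ?addr0 // => j _; by rewrite mul0r.
Qed.

Lemma coefs_uM y n : coefs (pser_u R * y) n = if (1 <= n)%N then coefs y (n - 1) else 0.
Proof.
rewrite coefsM; case: n => [|n] /=.
  by rewrite big_ord_recl big_ord0 /= mul0r addr0.
rewrite big_ord_recl /= mul0r add0r big_ord_recl /= mul1r subn1 /=.
by rewrite big1 ?addr0 // => j _; rewrite mul0r.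
Qed.

Lemma coefs_uXM k y n : coefs (pser_u R ^+ k * y) n =
  if (k <= n)%N then coefs y (n - k) else 0.
Proof.
elim: k n => [|k IH] n; first by rewrite expr0 mul1r subn0.
rewrite exprS -mulrA coefs_uM; case: n => [|n] //.
rewrite subn1 [n.+1.-1]/= IH ltnS; case: ifP => H //.

Qed.

Lemma coefs1 n : coefs (1 : pser R) n = (n == 0%N)%:R. Proof. by []. Qed.

Lemma coefs_frob p x n : coefs (pser_frob p x) n = if (p %| n)%N then coefs x (n %/ p) else 0.
Proof. by []. Qed.

Lemma frob1 p : (0 < p)%N -> pser_frob p (1 : pser R) = 1.
Proof.
move=> p0; apply: pser_ext => n; rewrite coefs_frob !coefs1.
case: ifP => [/dvdnP [q ->]|]; first by rewrite mulnK // muln_eq0 (negbTE (lt0n_neq0 p0)) orbF.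
by case: n => // /negbT; rewrite dvdn0.
Qed.


Lemma coefs_constuXM c k y n : coefs (pser_const c * pser_u R ^+ k * y) n =
  if (k <= n)%N then c * coefs y (n - k) else 0.
Proof. by rewrite -mulrA coefs_constM coefs_uXM; case: ifP => //; rewrite mulr0. Qed.

Lemma coefs_const (c : R) n : coefs (pser_const c) n = if n == 0%N then c else 0. Proof. by []. Qed.
Lemma coefs_uX k n : coefs (pser_u R ^+ k) n = ((n == k)%:R : R).
Proof.
rewrite -[pser_u R ^+ k]mulr1 coefs_uXM coefs1.
case: (ltngtP k n) => H.
- rewrite (_ : (n - k == 0)%N = false) //; lia.
- by [].
- by rewrite H subnn eqxx.
Qed.
End PS.

Section Solve.
Variables (p f : nat) (p2 : (2 <= p)%N) (f0 : (0 < f)%N) (r : 'I_f -> nat)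
  (rr : forall i, (1 <= r i <= p)%N) (J : {set 'I_f}).
Variables (kE : finFieldType) (a b : kE) (a0 : a != 0) (b0 : b != 0).
Variable cut : 'I_f -> nat -> bool.

Local Notation hh := (hh r J).
Local Notation ss := (ss r J).
Definition aa (i : 'I_f) := twist a i.
Definition bb (i : 'I_f) := twist b i.
Definition Dc i n : bool :=
  [&& (ss i <= n + hh i)%N, (p %| n + hh i - ss i)%N & ~~ cut i n].
Definition gg i n := ((n + hh i - ss i) %/ p)%N.
Definition Tv (w : 'I_f -> nat -> kE) i n :=
  aa i * w i n - (if Dc i n then bb i * w (iprev i) (gg i n) else 0).

Lemma aa0 i : aa i != 0. Proof. by rewrite /aa /twist; case: ifP => // _; exact: oner_neq0. Qed.
Lemma bb0 i : bb i != 0. Proof. by rewrite /bb /twist; case: ifP => // _; exact: oner_neq0. Qed.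

Lemma hh_le i : (hh i <= p)%N.
Proof. by have := rr i; rewrite /hh /hJ; case: (_ \in _); lia. Qed.

Lemma gg_small i n : (n <= 2 -> gg i n <= 2)%N.
Proof.
move=> Hn; rewrite /gg -ltnS ltn_divLR; last by lia.
have := hh_le i; nia.
Qed.

Lemma gg_lt i n : (3 <= n -> gg i n < n)%N.
Proof.
move=> Hn; rewrite /gg ltn_divLR; last by lia.
have := hh_le i; nia.
Qed.

Lemma Dc_rel i n : Dc i n -> (ss i <= n + hh i)%N /\ (p * gg i n = n + hh i - ss i)%N.
Proof.
by case/and3P => A B _; split => //; rewrite /gg mulnC divnK.
Qed.

Definition Hinj := forall w, (forall i n, (n <= 2)%N -> Tv w i n = 0) ->
  forall i n, (n <= 2)%N -> w i n = 0.

Section Build.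
Variable Y : 'I_f -> nat -> kE.
Variable w : {ffun 'I_f * 'I_3 -> kE}.
Definition ext (w : {ffun 'I_f * 'I_3 -> kE}) i n : kE :=
  if (n < 3)%N then w (i, inord n) else 0.

Fixpoint Zf k i n : kE :=
  match k with
  | 0 => ext w i n
  | k'.+1 => if (n < 3)%N then ext w i n
             else (Y i n + (if Dc i n then bb i * Zf k' (iprev i) (gg i n) else 0)) / aa i
  end.

Lemma Zf_eq k i n : Zf k.+1 i n = if (n < 3)%N then ext w i n
   else (Y i n + (if Dc i n then bb i * Zf k (iprev i) (gg i n) else 0)) / aa i.
Proof. by []. Qed.

Lemma Zf_S k : forall i n, (n <= k)%N -> Zf k.+1 i n = Zf k i n.
Proof.
elim: k => [|k IH] i n Hn.
  by have -> : n = 0%N by lia.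
rewrite Zf_eq [RHS]Zf_eq; case: ifP => // Hn3.
have Hg := gg_lt i (n:=n); rewrite IH //; lia.
Qed.

Lemma Zf_stable k i n : (n <= k)%N -> Zf k i n = Zf n i n.
Proof.
move=> Hk; rewrite -(subnK Hk); elim: (k - n)%N => [|d IH] //.
by rewrite addSn Zf_S // leq_addl.
Qed.

Lemma Zf_small i n : (n < 3)%N -> Zf n i n = ext w i n.
Proof. by case: n => //= n ->. Qed.
End Build.

Lemma solve (HI : Hinj) (Y : 'I_f -> nat -> kE) :
  exists z : 'I_f -> nat -> kE, forall i n, Tv z i n = Y i n.
Proof.
pose TF (w : {ffun 'I_f * 'I_3 -> kE}) : {ffun 'I_f * 'I_3 -> kE} :=
  [ffun v => Tv (ext w) v.1 (val v.2)].
have TFinj : injective TF.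
  move=> w1 w2 E.
  have H := HI (fun i n => ext w1 i n - ext w2 i n).
  apply/ffunP => [[i j]].
  suff : ext w1 i j - ext w2 i j = 0.
    by rewrite /ext ltn_ord inord_val => /eqP; rewrite subr_eq0 => /eqP.
  apply: H; last by have := ltn_ord j; lia.
  move=> i' n Hn.
  have := congr1 (fun F : {ffun 'I_f * 'I_3 -> kE} => F (i', inord n)) E; rewrite !ffunE /= inordK; last by lia.
  move/eqP; rewrite -subr_eq0 => /eqP E'.
  rewrite -E' /Tv; case: (Dc i' n); rewrite ?subr0; ring.
have [w Hw] : exists w, TF w = [ffun v => Y v.1 (val v.2)].
  have [g K1 K2] := injF_bij TFinj.
  by exists (g [ffun v => Y v.1 (val v.2)]); rewrite K2.
exists (fun i n => Zf Y w n i n) => i n.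
case: (ltnP n 3) => Hn.
  have := congr1 (fun F : {ffun 'I_f * 'I_3 -> kE} => F (i, inord n)) Hw; rewrite !ffunE /= inordK //.
  rewrite /Tv Zf_small // Zf_small //; last by have := gg_small i (n:=n); lia.
have [k Ek] : exists k, n = k.+1 by exists n.-1; lia.
have E1 : Zf Y w n i n = (Y i n + (if Dc i n then bb i * Zf Y w k (iprev i) (gg i n) else 0)) / aa i.
  by rewrite {1}Ek Zf_eq ltnNge Hn.
rewrite /Tv E1 (@Zf_stable Y w k); last by have := gg_lt i Hn; lia.
have := aa0 i; move: (aa i) => A A0.
by rewrite mulrC divfK // addrK.
Qed.

Fixpoint chn (i : 'I_f) (n : nat) k : nat :=
  match k with 0 => n | k'.+1 => gg (iter k' (@iprev f) i) (chn i n k') end.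

Section Chain.
Variables (w : 'I_f -> nat -> kE) (Hw : forall i n, (n <= 2)%N -> Tv w i n = 0).
Variables (i : 'I_f) (n : nat) (Hn : (n <= 2)%N) (nz : w i n != 0).
Local Notation c k := (iter k (@iprev f) i).
Local Notation nn := (chn i n).

Lemma chain_nz k : [/\ (nn k <= 2)%N, w (c k) (nn k) != 0 & Dc (c k) (nn k)].
Proof.
suff H : forall k, (nn k <= 2)%N /\ w (c k) (nn k) != 0.
  have [A B] := H k; split => //.
  have := Hw (c k) A; rewrite /Tv; case: (Dc _ _) => // /eqP.
  by rewrite subr0 mulf_eq0 (negbTE (aa0 _)) (negbTE B).
clear k; elim=> [|k [A B]] //=; split; first exact: gg_small.
have := Hw (c k) A; rewrite /Tv; case: (Dc _ _).
  move/eqP; rewrite subr_eq0 => /eqP E; apply/negP => /eqP Z.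
  by move: E; rewrite Z mulr0 => /eqP; rewrite mulf_eq0 (negbTE (aa0 _)) (negbTE B).
by move/eqP; rewrite subr0 mulf_eq0 (negbTE (aa0 _)) (negbTE B).
Qed.

Lemma chain_W k : aa (c k) * w (c k) (nn k) = bb (c k) * w (c k.+1) (nn k.+1).
Proof.
have [A _ D] := chain_nz k; have := Hw (c k) A; rewrite /Tv D.
by move/eqP; rewrite subr_eq0 => /eqP ->.
Qed.

Lemma chain_S : exists K,
    (ExcI p r J /\ forall k, (K <= k)%N ->
        nn k = (inext (c k) \in J) /\
        (c k \in J -> nn k + r (c k) = p)%N)
    \/ (ExcII p r J /\ forall k, (K <= k)%N -> nn k = 2%N).
Proof.
apply: (chain_struct p2 rr Hn) => k.
by have [_ _ D] := chain_nz k; have := Dc_rel D.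
Qed.

Lemma twist0 (x : kE) : twist x (Ordinal f0) = x. Proof. by []. Qed.
Lemma twistN (x : kE) (j : 'I_f) : j != Ordinal f0 -> twist x j = 1.
Proof.
move=> H; rewrite /twist; case: ifP => // /eqP E; case/negP: H.
by apply/eqP; apply: val_inj.
Qed.

Lemma period_ab K (G : 'I_f -> nat) :
  (forall k, (K <= k)%N -> nn k = G (c k)) -> a = b.
Proof.
move=> HG; have [k0 [Hk0 E0]] := hits i K (Ordinal f0).
pose W k := w (c k) (nn k).
have cD j : c (j + k0) = iter j (@iprev f) (Ordinal f0) by rewrite iterD E0.
have step j : (0 < j < f)%N -> W (j + k0) = W (j + k0).+1.
  move=> Hj; have := chain_W (j + k0); rewrite /aa /bb cD.
  rewrite !twistN ?mul1r; [by rewrite /W cD | exact: iter_prev_neq Hj | exact: iter_prev_neq Hj].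
have ind j : (0 < j <= f)%N -> W k0.+1 = W (j + k0).
  elim: j => [|j IH] // Hj.
  case: j IH Hj => [|j] IH Hj; first by [].
  rewrite IH; last by lia.
  by rewrite step //; lia.
have Wf : W (f + k0) = W k0.
  rewrite /W cD iter_prev_f HG ?cD ?iter_prev_f; last by lia.
  by rewrite HG // E0.
have := chain_W k0; rewrite -/(W k0) -/(W k0.+1) /aa /bb E0 !twist0.
rewrite (ind f) ?f0 ?leqnn // Wf => /eqP; rewrite -subr_eq0 -mulrBl mulf_eq0.
have [_ nzk _] := chain_nz k0.
by rewrite (negbTE nzk) orbF subr_eq0 => /eqP.
Qed.
End Chain.

Lemma Hinj_of (P : Prop) :
  (forall w, (forall i n, (n <= 2)%N -> Tv w i n = 0) -> forall i n, (n <= 2)%N -> w i n != 0 -> False) ->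
  Hinj.
Proof.
move=> H w Hw i n Hn; apply/eqP; apply: contraT => nz; exfalso; exact: (H w Hw i n Hn nz).
Qed.

Lemma inj_gen : (forall i n, cut i n = false) -> ~ (ExcI p r J /\ a = b) ->
  ~ (ExcII p r J /\ a = b) -> Hinj.
Proof.
move=> Hc N1 N2; apply: (Hinj_of True) => w Hw i n Hn nz.
have [K [[E1 T]|[E2 T]]] := chain_S Hw Hn nz.
  by apply: N1; split => //; apply: (period_ab Hw Hn nz (G := fun j => nat_of_bool (inext j \in J))) => k /T [].
by apply: N2; split => //; apply: (period_ab Hw Hn nz (G := fun _ => 2%N)) => k /T.
Qed.

Lemma inj_E1 i0 : i0 \in J -> ExcI p r J ->
  (forall i n, cut i n = (i == i0) && (n + hh i == p)%N) -> Hinj.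
Proof.
move=> Hi0 E Hc; apply: (Hinj_of True) => w Hw i n Hn nz.
have [K [[E1 T]|[E2 T]]] := chain_S Hw Hn nz; last exact: (excI_II p2 f0 E E2).
have [k [Hk Ek]] := hits i K i0.
have [_ T2] := T k Hk; rewrite Ek in T2; have T3 := T2 Hi0.
have [_ _ D] := chain_nz Hw Hn nz k; move: D; rewrite Ek /Dc Hc eqxx /=.
have Hh : hh i0 = r i0 by rewrite /hh /hJ Hi0.
by rewrite Hh T3 eqxx /= !andbF.
Qed.

Lemma inj_E2 i0 : i0 \in J -> ExcII p r J ->
  (forall i n, cut i n = (i == i0) && (n + hh i == 4)%N) -> Hinj.
Proof.
move=> Hi0 E Hc; apply: (Hinj_of True) => w Hw i n Hn nz.
have [K [[E1 T]|[E2 T]]] := chain_S Hw Hn nz; first exact: (excI_II p2 f0 E1 E).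
have [k [Hk Ek]] := hits i K i0.
have T2 := T k Hk.
have [_ _ D] := chain_nz Hw Hn nz k; move: D; rewrite Ek /Dc Hc eqxx /= T2.
have [_ [r2 _]] := E.
have Hh : hh i0 = r i0 by rewrite /hh /hJ Hi0.
by rewrite Hh r2 /= !andbF.
Qed.
End Solve.

Unset Implicit Arguments.
Section Main.
Variables (p : nat) (p_prime : prime p) (f : nat) (f_gt0 : (0 < f)%N)
  (kE : finFieldType) (r : 'I_f -> nat) (r_range : forall i, (1 <= r i <= p)%N)
  (J : {set 'I_f}) (a b : kE) (a_neq0 : a != 0) (b_neq0 : b != 0)
  (M : 'I_f -> lmodType (pser kE))
  (phiM : forall i : 'I_f, M (iprev i) -> M i)
  (iota : forall i : 'I_f, pser kE -> M i)
  (piM : forall i : 'I_f, M i -> pser kE)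
  (ext : is_extension p (fun i => (r i - hJ J r i)%N) b (hJ J r) a
                      M phiM iota piM).

Local Notation h := (hJ J r).
Local Notation s := (fun i => (r i - hJ J r i)%N).
Lemma p2 : (2 <= p)%N. Proof. exact: prime_gt1. Qed.
Lemma p0 : (0 < p)%N. Proof. exact: prime_gt0. Qed.

Definition A (i : 'I_f) : pser kE := pser_const (twist a i) * pser_u kE ^+ h i.
Definition B (i : 'I_f) : pser kE := pser_const (twist b i) * pser_u kE ^+ s i.

Lemma iota0 i : iota i 0 = 0.
Proof.
have [_ [_ [iL _]]] := ext; have := iL i 1 0 0.
rewrite mulr0 addr0 scale1r => E.
by apply: (addrI (iota i 0)); rewrite addr0 -E.
Qed.

Lemma iotaZ i y : iota i y = y *: iota i 1.
Proof.
have [_ [_ [iL _]]] := ext; have := iL i y 1 0.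
by rewrite mulr1 addr0 iota0 addr0.
Qed.

Lemma pi0 i : piM i 0 = 0.
Proof.
have [_ [_ [_ [pL _]]]] := ext; have := pL i 1 0 0.
rewrite scaler0 addr0 mul1r => E.
by apply: (addrI (piM i 0)); rewrite addr0 -E.
Qed.

Lemma piZD i x m m' : piM i (x *: m + m') = x * piM i m + piM i m'.
Proof. by have [_ [_ [_ [pL _]]]] := ext; apply: pL. Qed.

Lemma piZ i x m : piM i (x *: m) = x * piM i m.
Proof. by have := piZD i x m 0; rewrite !addr0 pi0 addr0. Qed.

Lemma piD i m m' : piM i (m + m') = piM i m + piM i m'.
Proof. by have := piZD i 1 m m'; rewrite scale1r mul1r. Qed.

Lemma pi_iota i y : piM i (iota i y) = 0.
Proof.
have [_ [_ [_ [_ [_ [_ [_ [_ K]]]]]]]] := ext.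
by apply/(K i); exists y.
Qed.

Lemma ker i m : piM i m = 0 -> exists y, m = y *: iota i 1.
Proof.
have [_ [_ [_ [_ [_ [_ [_ [_ K]]]]]]]] := ext.
by move/(K i) => [y ->]; exists y; rewrite iotaZ.
Qed.

Lemma surj_ex i : exists m, piM i m = 1.
Proof. by have [_ [_ [_ [_ [_ [_ [_ [S _]]]]]]]] := ext; apply: S. Qed.

Definition e i := iota i 1.
Definition g0 i : M i := proj1_sig (constructive_indefinite_description _ (surj_ex i)).
Lemma pi_g0 i : piM i (g0 i) = 1.
Proof. exact: (proj2_sig (constructive_indefinite_description _ (surj_ex i))). Qed.
Lemma pi_e i : piM i (e i) = 0. Proof. exact: pi_iota. Qed.

Lemma phi_e i : phiM i (e (iprev i)) = B i *: e i.
Proof.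
have [_ [_ [_ [_ [PI _]]]]] := ext.
by rewrite /e PI /phi_rk1 frob1 ?p0 // mulr1 iotaZ.
Qed.

Lemma phiD i m m' : phiM i (m + m') = phiM i m + phiM i m'.
Proof. by have [D _] := ext; apply: D. Qed.
Lemma phiZ i x m : phiM i (x *: m) = pser_frob p x *: phiM i m.
Proof. by have [_ [Z _]] := ext; apply: Z. Qed.

Lemma x0_ex i : exists y, phiM i (g0 (iprev i)) = A i *: g0 i + y *: e i.
Proof.
have [_ [_ [_ [_ [_ [PP _]]]]]] := ext.
have : piM i ((- A i) *: g0 i + phiM i (g0 (iprev i))) = 0.
  by rewrite piZD PP !pi_g0 /phi_rk1 frob1 ?p0 // !mulr1 addNr.
move/ker => [y Hy]; exists y.
by rewrite -/(e i) -Hy scaleNr addrA addrN add0r.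
Qed.

Definition x0 i := proj1_sig (constructive_indefinite_description _ (x0_ex i)).
Lemma phi_g0 i : phiM i (g0 (iprev i)) = A i *: g0 i + x0 i *: e i.
Proof. exact: (proj2_sig (constructive_indefinite_description _ (x0_ex i))). Qed.

Lemma basis i (g : M i) : piM i g = 1 -> is_basis2 (e i) g.
Proof.
move=> Hg m.
have : piM i ((- piM i m) *: g + m) = 0 by rewrite piZD Hg mulr1 addNr.
move/ker => [y Hy]; exists (y, piM i m); split.
  by rewrite /= -/(e i) -Hy scaleNr addrAC addNr add0r.
move=> [y1 y2] /= E.
have E2 : piM i m = y2 by rewrite E piZD piZ pi_e Hg mulr0 mulr1 add0r.
rewrite -E2; congr (_, _).
have : (y - y1) *: e i = 0.
  rewrite -/(e i) E2 in Hy; rewrite scalerBl -Hy {1}E.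
  by rewrite scaleNr addrCA addNr addr0 subrr.
rewrite /e -iotaZ -(iota0 i) => /(proj1 (proj2 (proj2 (proj2 (proj2 (proj2 (proj2 ext)))))) i).
by move/eqP; rewrite subr_eq0 => /eqP.
Qed.


Lemma core (cut : 'I_f -> nat -> bool) (HI : Hinj p r J a b cut) :
  exists (eg gg : forall i, M i) (x : 'I_f -> pser kE),
   [/\ forall i, is_basis2 (eg i) (gg i),
       forall i (m : M i), (exists y, m = iota i y) <-> (exists y, m = y *: eg i),
       forall i, phiM i (eg (iprev i)) = B i *: eg i,
       forall i, phiM i (gg (iprev i)) = A i *: gg i + x i *: eg i
     & forall i m, (h i <= m)%N -> ~~ cut i (m - h i)%N -> coefs (x i) m = 0].
Proof.
have [z Hz] := solve p2 f_gt0 r_range a_neq0 b_neq0 HI (fun i n => coefs (x0 i) (n + h i)).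
pose Z i := Pser (z i).
pose GG i := g0 i + Z i *: e i.
pose x i := x0 i - A i * Z i + B i * pser_frob p (Z (iprev i)).
exists e, GG, x; split.
- move=> i; apply: basis; by rewrite piD piZ pi_e mulr0 addr0 pi_g0.
- move=> i m; split => -[y ->]; exists y; by rewrite /e -?iotaZ.
- exact: phi_e.
- move=> i; rewrite /GG phiD phiZ phi_e phi_g0 /x.
  rewrite scalerA scalerDr !scalerDl scaleNr scalerA [pser_frob _ _ * _]mulrC.
  by rewrite [_ *: e i - _]addrC !addrA addrK.
- move=> i m Hm Hc.
  have := Hz i (m - h i)%N.
  rewrite /Tv /Dc /gg /aa /bb /ss /hh subnK // (negbTE Hc) andbT.
  rewrite /x coefsD coefsB /A /B coefs_constuXM coefs_constuXM coefs_frob Hm.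
  move=> <-; rewrite /Z /=.
  case: (_ <= m)%N; case: (p %| _)%N; rewrite /= ?mulr0; ring.
Qed.

Lemma shape_of (d : nat) (i0 : 'I_f) (x : 'I_f -> pser kE) :
  (forall i m, (h i <= m)%N -> ~~ ((i == i0) && ((m - h i) + h i == d)%N) -> coefs (x i) m = 0) ->
  forall i, (if i == i0 then exists (y : pser kE) (c : kE),
     pser_deg_lt y (h i) /\ x i = y + pser_const c * pser_u kE ^+ d
   else pser_deg_lt (x i) (h i)).
Proof.
move=> H i; case: eqP => Hi.
- exists (x i - pser_const (coefs (x i) d) * pser_u kE ^+ d), (coefs (x i) d); split; last by rewrite subrK.
  move=> m Hm; rewrite coefsB coefs_constM coefs_uX.
  case: (eqVneq m d) => [->|Hmd]; first by rewrite mulr1 subrr.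
  rewrite mulr0 subr0; apply: H => //; by rewrite subnK // (negbTE Hmd) andbF.
- move=> m Hm; apply: H => //; by rewrite (introF eqP Hi).
Qed.

Lemma part_gen :
  ~ (inP p r /\ J = [set i | r (iprev i) != p] /\ a = b) ->
  ~ (p = 2%N /\ (forall i, r i = 2%N) /\ J = [set: 'I_f] /\ a = b) ->
  good_bases p s b h a M phiM iota (fun i x => pser_deg_lt x (h i)).
Proof.
move=> N1 N2.
have HI := @inj_gen p f p2 f_gt0 r r_range J kE a b a_neq0 b_neq0 (fun _ _ => false)
  (fun _ _ => erefl) (fun '(conj (conj X Y) Z) => N1 (conj X (conj Y Z)))
  (fun '(conj (conj X (conj Y W)) Z) => N2 (conj X (conj Y (conj W Z)))).
have [eg [gg [x [H1 H2 H3 H4 H5]]]] := core _ HI.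
exists eg, gg, x; split => // i n Hn; exact: H5.
Qed.

Lemma part_E1 :
  inP p r /\ J = [set i | r (iprev i) != p] /\ a = b ->
  forall i0, i0 \in J ->
  good_bases p s b h a M phiM iota
      (fun i x => if i == i0 then
         exists (y : pser kE) (c : kE),
           pser_deg_lt y (h i) /\ x = y + pser_const c * pser_u kE ^+ p
       else pser_deg_lt x (h i)).
Proof.
move=> [X [Y _]] i0 Hi0.
have HI := @inj_E1 p f p2 f_gt0 r r_range J kE a b a_neq0 b_neq0
  (fun i n => (i == i0) && (n + hh r J i == p)%N) i0 Hi0 (conj X Y) (fun _ _ => erefl).
have [eg [gg [x [H1 H2 H3 H4 H5]]]] := core _ HI.
exists eg, gg, x; split => //; apply: (shape_of p) => i m Hm Hc; exact: H5.
Qed.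

Lemma part_E2 :
  p = 2%N /\ (forall i, r i = 2%N) /\ J = [set: 'I_f] /\ a = b ->
  forall i0, i0 \in J ->
  good_bases p s b h a M phiM iota
      (fun i x => if i == i0 then
         exists (y : pser kE) (c : kE),
           pser_deg_lt y (h i) /\ x = y + pser_const c * pser_u kE ^+ 4
       else pser_deg_lt x (h i)).
Proof.
move=> [X [Y [W _]]] i0 Hi0.
have HI := @inj_E2 p f p2 f_gt0 r r_range J kE a b a_neq0 b_neq0
  (fun i n => (i == i0) && (n + hh r J i == 4)%N) i0 Hi0 (conj X (conj Y W)) (fun _ _ => erefl).
have [eg [gg [x [H1 H2 H3 H4 H5]]]] := core _ HI.
exists eg, gg, x; split => //; apply: (shape_of 4) => i m Hm Hc; exact: H5.
Qed.
End Main.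

Set Implicit Arguments.
Theorem mainTheorem8
  (p : nat) (p_prime : prime p)
  (f : nat) (f_gt0 : (0 < f)%N)
  (kE : finFieldType) (kE_char : p \in [pchar kE])
  (kE_contains_k : (f %| logn p #|kE|)%N)
  (r : 'I_f -> nat) (r_range : forall i, (1 <= r i <= p)%N)
  (J : {set 'I_f})
  (a b : kE) (a_neq0 : a != 0) (b_neq0 : b != 0)
  (M : 'I_f -> lmodType (pser kE))
  (phiM : forall i : 'I_f, M (iprev i) -> M i)
  (iota : forall i : 'I_f, pser kE -> M i)
  (pi : forall i : 'I_f, M i -> pser kE)
  (ext : is_extension p (fun i => (r i - hJ J r i)%N) b (hJ J r) a
                      M phiM iota pi) :
  (* generic case *)
  ( ~ (inP p r /\ J = [set i | r (iprev i) != p] /\ a = b) ->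
    ~ (p = 2%N /\ (forall i, r i = 2%N) /\ J = [set: 'I_f] /\ a = b) ->
    good_bases p (fun i => (r i - hJ J r i)%N) b (hJ J r) a M phiM iota
      (fun i x => pser_deg_lt x (hJ J r i)) )
  /\
  (* exceptional case (i) *)
  ( inP p r /\ J = [set i | r (iprev i) != p] /\ a = b ->
    forall i0, i0 \in J ->
    good_bases p (fun i => (r i - hJ J r i)%N) b (hJ J r) a M phiM iota
      (fun i x => if i == i0 then
         exists (y : pser kE) (c : kE),
           pser_deg_lt y (hJ J r i) /\ x = y + pser_const c * pser_u kE ^+ p
       else pser_deg_lt x (hJ J r i)) )
  /\
  (* exceptional case (ii) *)
  ( p = 2%N /\ (forall i, r i = 2%N) /\ J = [set: 'I_f] /\ a = b ->
    forall i0, i0 \in J ->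
    good_bases p (fun i => (r i - hJ J r i)%N) b (hJ J r) a M phiM iota
      (fun i x => if i == i0 then
         exists (y : pser kE) (c : kE),
           pser_deg_lt y (hJ J r i) /\ x = y + pser_const c * pser_u kE ^+ 4
       else pser_deg_lt x (hJ J r i)) ).
Proof.
split; first exact: (part_gen p p_prime f f_gt0 kE r r_range J a b a_neq0 b_neq0 M phiM iota pi ext).
split; first exact: (part_E1 p p_prime f f_gt0 kE r r_range J a b a_neq0 b_neq0 M phiM iota pi ext).
exact: (part_E2 p p_prime f f_gt0 kE r r_range J a b a_neq0 b_neq0 M phiM iota pi ext).
Qed.
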